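(* Let $n\ge1$ and $0<\varphi<1$. Let $\mathbf B=(B_1,\dots,B_n)$ be $\{0,1\}$-valued random variables whose joint distribution $\mu$ belongs to $\overline{\mathcal B_\varphi}$, and let $\hat\Theta=\frac1n\sum_{i=1}^nB_i$. Then for each $P\in\{P_{\mathrm{X},n},P_{\mathrm{CH},n},P_{\mathrm{PBR},n}\}$ and every $p\ge0$, $$\mathbb{P}_\mu\big(P(\hat\Theta|\varphi)\le p\big)\le p.$$
   Context: $\overline{\mathcal B_\varphi}$ is the set of distributions $\mu$ of $(B_1,\dots,B_n)\in\{0,1\}^n$ such that for every $i$ and every $\mathbf b_{\le i-1}\in\{0,1\}^{i-1}$ with $\mathbb{P}_\mu(\mathbf B_{\le i-1}=\mathbf b_{\le i-1})>0$, $\mathbb{P}_\mu(B_i=1\mid \mathbf B_{\le i-1}=\mathbf b_{\le i-1})\le\varphi$. For $t\in[0,1]$ with $nt$ an integer (convention $0^0=1$): $P_{\mathrm{X},n}(t|\varphi)=\sum_{k\ge nt}\binom{n}{k}\varphi^k(1-\varphi)^{n-k}$; $P_{\mathrm{CH},n}(t|\varphi)=\left(\frac{\varphi}{t}\right)^{nt}\left(\frac{1-\varphi}{1-t}\right)^{n(1-t)}$ if $t\ge\varphi$, and $=1$ otherwise; $P_{\mathrm{PBR},n}(t|\varphi)=\varphi^{nt}(1-\varphi)^{n(1-t)}(n+1)\binom{n}{nt}$ if $t\ge\varphi$, and $=t^{nt}(1-t)^{n(1-t)}(n+1)\binom{n}{nt}$ otherwise. *)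

(* Defs.v *)
From HB Require Import structures.
From mathcomp Require Import all_boot all_order all_algebra.
Set Implicit Arguments. Unset Strict Implicit. Unset Printing Implicit Defensive.
Import Order.TTheory GRing.Theory Num.Theory.
Local Open Scope ring_scope.

(* Outcomes (b_1,...,b_n) in {0,1}^n, indexed by 'I_n (coordinate i <-> B_{i+1}). *)
Definition outcome (n : nat) := {ffun 'I_n -> bool}.

Definition is_distr (R : realFieldType) (n : nat) (mu : {ffun outcome n -> R}) : Prop :=
  (forall x, 0 <= mu x) /\ \sum_(x : outcome n) mu x = 1.

Definition Prob (R : realFieldType) (n : nat) (mu : {ffun outcome n -> R})
  (A : pred (outcome n)) : R := \sum_(x : outcome n | A x) mu x.

(* x agrees with y on the first i coordinates (B_{<= i-1} = b_{<= i-1} for 0-based i) *)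
Definition prefix_eq (n : nat) (i : nat) (y x : outcome n) : bool :=
  [forall j : 'I_n, (j < i)%N ==> (x j == y j)].

(* The prefix b_{<= i-1} is represented
   by the first i coordinates of some full outcome y. *)
Definition in_Bbar (R : realFieldType) (n : nat) (phi : R) (mu : {ffun outcome n -> R}) : Prop :=
  forall (i : 'I_n) (y : outcome n),
    0 < Prob mu (prefix_eq i y) ->
    Prob mu [pred x | prefix_eq i y x && x i] / Prob mu (prefix_eq i y) <= phi.

(* number of successes, n * Theta_hat *)
Definition nsucc (n : nat) (x : outcome n) : nat := \sum_(i < n) (x i : nat).

(* The three p-value functions, evaluated at t = k / n (so that n t = k is an integer). *)
Definition P_X (R : realFieldType) (n k : nat) (phi : R) : R :=
  \sum_(k <= j < n.+1) ('C(n, j))%:R * phi ^+ j * (1 - phi) ^+ (n - j).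

Definition P_CH (R : realFieldType) (n k : nat) (phi : R) : R :=
  let t := k%:R / n%:R in
  if phi <= t then (phi / t) ^+ k * ((1 - phi) / (1 - t)) ^+ (n - k) else 1.

Definition P_PBR (R : realFieldType) (n k : nat) (phi : R) : R :=
  let t := k%:R / n%:R in
  if phi <= t then phi ^+ k * (1 - phi) ^+ (n - k) * (n.+1)%:R * ('C(n, k))%:R
  else t ^+ k * (1 - t) ^+ (n - k) * (n.+1)%:R * ('C(n, k))%:R.

(* Main.v *)
Require Import Defs.
From HB Require Import structures.
From mathcomp Require Import all_boot all_order all_algebra.
From mathcomp Require Import lra ring.
Import Order.TTheory GRing.Theory Num.Theory.
Local Open Scope ring_scope.

Section Arith.
Variable R : realFieldType.
Variable phi : R.
Hypothesis hphi0 : 0 <= phi.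
Hypothesis hphi1 : phi <= 1.

Definition bb (r i : nat) : R := ('C(r, i))%:R * phi ^+ i * (1 - phi) ^+ (r - i).

Lemma PXE r j : P_X r j phi = \sum_(j <= i < r.+1) bb r i.
Proof. by []. Qed.

Lemma bb_ge0 r i : 0 <= bb r i.
Proof.
have h1 : 0 <= 1 - phi by rewrite subr_ge0.
rewrite /bb; apply: mulr_ge0; [apply: mulr_ge0|]; [exact: ler0n|exact: exprn_ge0|exact: exprn_ge0].
Qed.

Lemma PX_ge0 r j : 0 <= P_X r j phi.
Proof. rewrite PXE; apply: sumr_ge0 => i _; exact: bb_ge0. Qed.

Lemma PX_mono r j : P_X r j.+1 phi <= P_X r j phi.
Proof.
rewrite !PXE; case: (leqP j r) => hj.
  by rewrite (@big_ltn _ _ _ j) ?ltnS // lerDr bb_ge0.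
rewrite big_geq ?(big_geq (m:=j)) //; exact: ltnW.
Qed.

Lemma PX_rec r j :
  P_X r.+1 j.+1 phi = phi * P_X r j phi + (1 - phi) * P_X r j.+1 phi.
Proof.
rewrite !PXE big_add1 /=.
pose c i := ('C(r, i.+1))%:R * phi ^+ i.+1 * (1 - phi) ^+ (r - i).
have E1 : \sum_(j <= i < r.+1) bb r.+1 i.+1 =
    phi * \sum_(j <= i < r.+1) bb r i + \sum_(j <= i < r.+1) c i.
  rewrite mulr_sumr -big_split /=; apply: eq_bigr => i _.
  by rewrite /bb /c binS natrD subSS exprS; ring.
rewrite E1 big_add1 /= mulr_sumr; congr (_ + _).
case: (leqP j r) => hj.
  rewrite big_nat_recr //= {2}/c bin_small // mul0r !mul0r addr0.
  rewrite mulr_sumr; apply: eq_big_nat => i /andP [_ hi].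
  by rewrite /bb /c -(subnSK hi) [(1 - phi) ^+ (_.+1)]exprS; ring.
rewrite big_geq ?(big_geq (m:=j)) ?mulr0 //; exact: ltnW.
Qed.

Lemma PX_0 r : P_X r 0 phi = 1.
Proof.
rewrite PXE.
have -> : 1 = (1 - phi + phi) ^+ r by rewrite subrK expr1n.
rewrite exprDn big_mkord; apply: eq_bigr => i _.
by rewrite /bb -mulr_natl; ring.
Qed.

Lemma PX_step r j :
  P_X r.+1 j phi = P_X r j phi + phi * (P_X r j.-1 phi - P_X r j phi).
Proof.
case: j => [|j] /=; first by rewrite !PX_0 subrr mulr0 addr0.
rewrite PX_rec; ring.
Qed.

Lemma PX_big r j : (r < j)%N -> P_X r j phi = 0.
Proof. by move=> h; rewrite PXE big_geq. Qed.

Lemma PX_0r j : P_X 0 j phi = (j == 0%N)%:R.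
Proof.
case: j => [|j]; first by rewrite PX_0.
by rewrite PX_big.
Qed.
End Arith.
Section Key.
Variable R : realFieldType.
Variable n : nat.
Variable phi : R.
Variable mu : {ffun outcome n -> R}.
Hypothesis hmu0 : forall x, 0 <= mu x.
Hypothesis hB : in_Bbar phi mu.

Lemma pe_refl i (x : outcome n) : prefix_eq i x x.
Proof. by apply/forallP => j; apply/implyP. Qed.

Lemma pe_sym i (x y : outcome n) : prefix_eq i x y = prefix_eq i y x.
Proof.
by apply/forallP/forallP => h j; apply/implyP => hj;
  move/implyP: (h j) => /(_ hj) /eqP ->.
Qed.

Lemma pe_trans i (x y z : outcome n) : prefix_eq i x y -> prefix_eq i y z -> prefix_eq i x z.
Proof.
move=> /forallP h1 /forallP h2; apply/forallP => j; apply/implyP => hj.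
move/implyP: (h1 j) => /(_ hj) /eqP <-.
by move/implyP: (h2 j) => /(_ hj) /eqP ->.
Qed.

Lemma Prob_ge0 (A : pred (outcome n)) : 0 <= Prob mu A.
Proof. by apply: sumr_ge0 => x _. Qed.

Lemma mu_le_Prob (A : pred (outcome n)) (x : outcome n) : A x -> mu x <= Prob mu A.
Proof.
move=> hx; rewrite /Prob (bigD1 x) //= lerDl.
by apply: sumr_ge0 => y _.
Qed.

Lemma key (m : 'I_n) (D : outcome n -> R) :
  (forall x, 0 <= D x) ->
  (forall x y, prefix_eq m y x -> D x = D y) ->
  \sum_x mu x * ((x m)%:R * D x) <= phi * \sum_x mu x * D x.
Proof.
move=> D0 Dc.
pose c x := Prob mu (prefix_eq m x).
pose a x := Prob mu [pred z | prefix_eq m x z && z m].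
have c_eq x y : prefix_eq m y x -> c x = c y.
  move=> h; rewrite /c /Prob; apply: eq_bigl => z.
  apply/idP/idP => hz.
    exact: pe_trans h hz.
  by apply: pe_trans hz; rewrite pe_sym.
have muc x : mu x <= c x by apply: mu_le_Prob; exact: pe_refl.
have E : \sum_x mu x * ((x m)%:R * D x) = \sum_y mu y * D y * (a y / c y).
  symmetry.
  transitivity (\sum_y \sum_z (if prefix_eq m y z && z m then mu y * D y * mu z / c y else 0)).
    apply: eq_bigr => y _.
    rewrite /a /Prob big_mkcond mulr_suml mulr_sumr; apply: eq_bigr => z _.
    case: ifP => /= h; rewrite h ?mul0r ?mulr0 //; ring.
  rewrite exchange_big /=; apply: eq_bigr => z _.
  case hz: (z m); last first.
    by rewrite mul0r mulr0; apply: big1 => y _; rewrite andbF.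
  rewrite mul1r.
  transitivity (\sum_y (if prefix_eq m z y then mu y * (D z * mu z / c z) else 0)).
    apply: eq_bigr => y _; rewrite andbT.
    have -> : prefix_eq m z y = prefix_eq m y z by rewrite pe_sym.
    case: ifP => // hy; rewrite -(Dc z y hy) -(c_eq z y hy); ring.
  rewrite -big_mkcond -mulr_suml -/(Prob mu _) -/(c z).
  have [cz0|cz0] := eqVneq (c z) 0.
    have -> : mu z = 0 by apply/eqP; rewrite eq_le hmu0 andbT -cz0.
    by rewrite !(mulr0, mul0r).
  by field.
rewrite E mulr_sumr; apply: ler_sum => y _.
have [cy0|cy0] := eqVneq (c y) 0.
  have -> : mu y = 0 by apply/eqP; rewrite eq_le hmu0 andbT -cy0.
  by rewrite !(mulr0, mul0r).
have cpos : 0 < c y by rewrite lt0r cy0 Prob_ge0.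
rewrite mulrC; apply: ler_wpM2r; first by apply: mulr_ge0.
exact: hB.
Qed.

Hypothesis hphi0 : 0 <= phi.
Hypothesis hphi1 : phi <= 1.
Hypothesis hmu1 : \sum_x mu x = 1.

Definition ss (m : nat) (x : outcome n) : nat := (\sum_(i < n | (i < m)%N) (x i : nat))%N.

Lemma ss_pe (m : nat) x y : prefix_eq m y x -> ss m x = ss m y.
Proof.
move=> /forallP h; apply: eq_bigr => i hi.
by move/implyP: (h i) => /(_ hi) /eqP ->.
Qed.

Lemma ssS (mo : 'I_n) x : ss mo.+1 x = (ss mo x + x mo)%N.
Proof.
rewrite /ss (bigD1 mo) //= addnC; congr (_ + _)%N.
apply: eq_bigl => i; rewrite ltnS leq_eqVlt.
rewrite -val_eqE /=; by case: ltngtP.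
Qed.

Lemma ss0 x : ss 0 x = 0%N.
Proof. by rewrite /ss big_pred0. Qed.

Lemma ssn x : ss n x = nsucc x.
Proof. by rewrite /ss /nsucc; apply: eq_bigl => i; rewrite ltn_ord. Qed.

Definition EE k m := \sum_x mu x * P_X (n - m) (k - ss m x) phi.

Lemma EE_step k m : (m < n)%N -> EE k m.+1 <= EE k m.
Proof.
move=> hm; pose mo := Ordinal hm.
pose r := (n - m.+1)%N.
have hr : (n - m)%N = r.+1 by rewrite /r subnSK.
pose D x := P_X r (k - ss m x).-1 phi - P_X r (k - ss m x) phi.
have E1 : EE k m.+1 = \sum_x mu x * P_X r (k - ss m x) phi
    + \sum_x mu x * ((x mo)%:R * D x).
  rewrite -big_split; apply: eq_bigr => x _ /=.
  rewrite -mulrDr; congr (_ * _).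
  rewrite (ssS mo x) /= subnDA /D -/r.
  by case: (x mo) => /=; rewrite ?subn0 ?subn1 ?mul0r ?mul1r ?addr0 // addrC subrK.
have E2 : EE k m = \sum_x mu x * P_X r (k - ss m x) phi
    + phi * \sum_x mu x * D x.
  rewrite mulr_sumr -big_split; apply: eq_bigr => x _ /=.
  by rewrite /EE hr PX_step /D; ring.
rewrite E1 E2 lerD2l; apply: key.
  move=> x; rewrite /D subr_ge0; case: (k - ss m x)%N => [|j] //=.
  exact: PX_mono.
by move=> x y h; rewrite /D (@ss_pe m x y h).
Qed.

Lemma dom k : Prob mu [pred x | (k <= nsucc x)%N] <= P_X n k phi.
Proof.
have H : forall m, (m <= n)%N -> EE k m <= EE k 0.
  elim=> [|m IH] hm //.
  exact: le_trans (EE_step k m hm) (IH (ltnW hm)).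
have E0 : EE k 0 = P_X n k phi.
  rewrite /EE -[RHS]mul1r -hmu1 mulr_suml; apply: eq_bigr => x _.
  by rewrite ss0 !subn0.
have En : EE k n = Prob mu [pred x | (k <= nsucc x)%N].
  rewrite /EE /Prob [RHS]big_mkcond; apply: eq_bigr => x _ /=.
  by rewrite subnn PX_0r ssn subn_eq0; case: ifP; rewrite ?mulr1 ?mulr0.
by rewrite -En -E0; apply: H.
Qed.
End Key.

Arguments bb {R}.
Section Cmp.
Variable R : realFieldType.

Lemma bb_ratio (psi : R) r i : (i < r)%N ->
  (i.+1)%:R * (1 - psi) * bb psi r i.+1 = (r - i)%:R * psi * bb psi r i.
Proof.
move=> hi.
have e : (1 - psi) ^+ (r - i) = (1 - psi) * (1 - psi) ^+ (r - i.+1)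
  by rewrite -exprS subnSK.
have h : (i.+1)%:R * ('C(r, i.+1))%:R = (r - i)%:R * ('C(r, i))%:R :> R
  by rewrite -!natrM mul_bin_left.
rewrite /bb e exprS.
transitivity (((i.+1)%:R * ('C(r, i.+1))%:R) * (psi * psi ^+ i * (1 - psi) * (1 - psi) ^+ (r - i.+1))); first ring.
rewrite h; ring.
Qed.

Lemma bb_dec (psi : R) r i : 0 <= psi -> psi < 1 -> r%:R * psi <= i%:R ->
  bb psi r i.+1 <= bb psi r i.
Proof.
move=> p0 p1 hri.
have p1' : psi <= 1 by apply: ltW.
case: (ltnP i r) => hi; last first.
  by rewrite /bb bin_small ?ltnS // !mul0r bb_ge0.
have pos : 0 < (i.+1)%:R * (1 - psi).
  by apply: mulr_gt0; rewrite ?ltr0Sn ?subr_gt0.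
rewrite -(ler_pM2l pos) bb_ratio //.
apply: ler_wpM2r; first exact: bb_ge0.
rewrite (natrB _ (ltnW hi)) -natr1.
rewrite mulrBl mulrDl mulrBr mul1r mulr1.
move: hri; set a := r%:R * psi; set b := i%:R * psi; move=> hri.
have : 0 <= 1 - psi by rewrite subr_ge0.
clearbody a b; lra.
Qed.

Lemma bb_inc (psi : R) r i : 0 <= psi -> psi < 1 -> (i.+1)%:R <= r%:R * psi ->
  bb psi r i <= bb psi r i.+1.
Proof.
move=> p0 p1 hri.
have p1' : psi <= 1 by apply: ltW.
have hi : (i < r)%N.
  rewrite -(ler_nat R); apply: le_trans hri _.
  rewrite -[X in _ <= X]mulr1; apply: ler_wpM2l => //; exact: ler0n.
have pos : 0 < (i.+1)%:R * (1 - psi).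
  by apply: mulr_gt0; rewrite ?ltr0Sn ?subr_gt0.
rewrite -(ler_pM2l pos) bb_ratio //.
apply: ler_wpM2r; first exact: bb_ge0.
rewrite (natrB _ (ltnW hi)) -natr1 in hri *.
rewrite mulrBl mulrDl mulrBr mul1r mulr1.
move: hri; set a := r%:R * psi; set b := i%:R * psi; move=> hri.
have : 0 <= psi by [].
clearbody a b; lra.
Qed.

Lemma bb_dec_from (psi : R) r k : 0 <= psi -> psi < 1 -> r%:R * psi <= k%:R ->
  forall d, bb psi r (k + d) <= bb psi r k.
Proof.
move=> p0 p1 h; elim=> [|d IH]; first by rewrite addn0.
rewrite addnS; apply: le_trans IH; apply: bb_dec => //.
apply: le_trans h _; rewrite ler_nat; exact: leq_addr.
Qed.

Lemma bb_inc_to (psi : R) r k : 0 <= psi -> psi < 1 -> k%:R <= r%:R * psi ->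
  forall d i, (i + d)%N = k -> bb psi r i <= bb psi r k.
Proof.
move=> p0 p1 h; elim=> [|d IH] i hi; first by rewrite -hi addn0.
apply: le_trans (IH i.+1 _); last by rewrite addSnnS.
apply: bb_inc => //; apply: le_trans h; rewrite ler_nat -hi.
by rewrite addnS ltnS leq_addr.
Qed.

Lemma bb_mode (psi : R) r k : 0 <= psi -> psi < 1 -> r%:R * psi = k%:R ->
  forall i, bb psi r i <= bb psi r k.
Proof.
move=> p0 p1 h i; case: (leqP k i) => hki.
  rewrite -(subnKC hki); apply: bb_dec_from => //; by rewrite h.
apply: (@bb_inc_to psi r k p0 p1 _ (k - i)%N i); first by rewrite h.
by rewrite subnKC // ltnW.
Qed.

End Cmp.
Arguments bb {R}.

Section Cmp2.
Variable R : realFieldType.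
Variable n : nat.
Hypothesis hn : (1 <= n)%N.
Variable phi : R.
Hypothesis hphi0 : 0 < phi.
Hypothesis hphi1 : phi < 1.

Lemma eqle (x y : R) : x = y -> x <= y.
Proof. by move->. Qed.

Lemma ch_alg (a b u : R) k m : a * b = 1 ->
  (a * u) ^+ k * (b ^+ k * u ^+ m) = u ^+ (k + m).
Proof.
move=> H; rewrite exprD.
transitivity ((a * b) ^+ k * (u ^+ k * u ^+ m)); first by rewrite !exprMn; ring.
by rewrite H expr1n mul1r.
Qed.

Lemma PX_le1 (psi : R) r k : 0 <= psi -> psi <= 1 -> P_X r k psi <= 1.
Proof.
move=> p0 p1; elim: k => [|k IH]; first by rewrite PX_0.
exact: le_trans (@PX_mono _ psi p0 p1 r k) IH.
Qed.

Lemma sum_bb_le (psi : R) r k : 0 <= psi -> psi < 1 -> r%:R * psi <= k%:R ->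
  \sum_(k <= i < r.+1) bb psi r i <= bb psi r k *+ r.+1.
Proof.
move=> p0 p1 h.
have p1' : psi <= 1 by apply: ltW.
apply: (@le_trans _ _ (\sum_(k <= i < r.+1) bb psi r k)).
  apply: ler_sum_nat => i /andP [hki _].
  rewrite -(subnKC hki); exact: bb_dec_from.
rewrite sumr_const_nat; apply: ler_wpMn2l; first exact: bb_ge0.
exact: leq_subr.
Qed.

Lemma nR0 : (n%:R : R) != 0.
Proof. by rewrite pnatr_eq0 -lt0n. Qed.

Lemma cmp_PBR k : (k <= n)%N -> P_X n k phi <= P_PBR n k phi.
Proof.
move=> hk.
have p0 : 0 <= phi by apply: ltW.
have p1 : phi <= 1 by apply: ltW.
have npos : (0 : R) < n%:R by rewrite ltr0n.
rewrite /P_PBR /=; case: ifP => h.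
  rewrite ler_pdivlMr // in h.
  rewrite PXE; apply: le_trans (@sum_bb_le phi n k p0 hphi1 _) _; first by rewrite mulrC.
  by rewrite /bb -[_ *+ n.+1]mulr_natr; apply: eqle; ring.
have ht : k%:R / n%:R < phi by rewrite ltNge h.
set t := k%:R / n%:R in ht *.
have t0 : 0 <= t by apply: divr_ge0; apply: ler0n.
have t1 : t < 1 by apply: lt_trans ht hphi1.
have nt : n%:R * t = k%:R by rewrite /t mulrC divfK // nR0.
apply: (@le_trans _ _ (\sum_(0 <= i < n.+1) bb t n i)).
  by rewrite -PXE PX_0; exact: (@PX_le1 phi n k p0 p1).
apply: (@le_trans _ _ (\sum_(0 <= i < n.+1) bb t n k)).
  by apply: ler_sum_nat => i _; apply: bb_mode.
rewrite sumr_const_nat subn0 /bb -[_ *+ n.+1]mulr_natr; apply: eqle; ring.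
Qed.

Lemma cmp_CH k : (k <= n)%N -> P_X n k phi <= P_CH n k phi.
Proof.
move=> hk.
have p0 : 0 <= phi by apply: ltW.
have p1 : phi <= 1 by apply: ltW.
have npos : (0 : R) < n%:R by rewrite ltr0n.
rewrite /P_CH /=; case: ifP => h; last exact: PX_le1.
set t := k%:R / n%:R in h *.
have tpos : 0 < t by apply: lt_le_trans h.
case: (ltngtP k n) => hkn; last 2 first.
- by move: hk; rewrite leqNgt hkn.
- have t1 : t = 1 by rewrite /t hkn divff // nR0.
  rewrite t1 hkn subnn expr0 divr1 mulr1 PXE big_nat1 /bb subnn expr0 mulr1.
  by rewrite binn mul1r.
have t1 : t < 1 by rewrite /t ltr_pdivrMr // mul1r ltr_nat.
have phin0 : phi != 0 by rewrite gt_eqF.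
have tn0 : t != 0 by rewrite gt_eqF.
have omt : 1 - t != 0 by rewrite subr_eq0 eq_sym lt_eqF.
set u := (1 - phi) / (1 - t).
set z := t / phi * u.
have u1 : 1 <= u by rewrite /u ler_pdivlMr ?subr_gt0 // mul1r; lra.
have tphi1 : 1 <= t / phi by rewrite ler_pdivlMr // mul1r.
have z1 : 1 <= z by apply: mulr_ege1.
have zpos : 0 < z by apply: lt_le_trans z1.
have M : (1 - phi) + phi * z = u by rewrite /z /u; field; rewrite omt phin0.
have zk : 0 < z ^+ k by apply: exprn_gt0.
have Hb : z ^+ k * P_X n k phi <= u ^+ n.
  rewrite PXE mulr_sumr.
  apply: (@le_trans _ _ (\sum_(k <= i < n.+1) bb phi n i * z ^+ i)).
    apply: ler_sum_nat => i /andP [hki _]; rewrite mulrC.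
    apply: ler_wpM2l; first exact: bb_ge0.
    exact: ler_weXn2l.
  apply: (@le_trans _ _ (\sum_(0 <= i < n.+1) bb phi n i * z ^+ i)).
    rewrite (@big_cat_nat _ _ _ k 0 n.+1) //=; last exact: leqW.
    rewrite lerDr; apply: sumr_ge0 => i _.
    apply: mulr_ge0; [exact: bb_ge0 | apply: exprn_ge0; exact: ltW].
  rewrite -M exprDn big_mkord; apply: eqle; apply: eq_bigr => i _.
  by rewrite /bb [in RHS]exprMn -[in RHS]mulr_natr; ring.
rewrite -(ler_pM2l zk); apply: le_trans Hb _; apply: eqle.
have e1 : (t / phi) * (phi / t) = 1 by field; rewrite tn0 phin0.
rewrite -[in LHS](subnKC hk); symmetry; exact: ch_alg.
Qed.
End Cmp2.

Theorem mainTheorem14 (R : realFieldType) (n : nat) (hn : (1 <= n)%N)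
  (phi : R) (hphi0 : 0 < phi) (hphi1 : phi < 1)
  (mu : {ffun outcome n -> R}) (hmu : is_distr mu) (hB : in_Bbar phi mu) :
  forall P : nat -> nat -> R -> R,
    P = @P_X R \/ P = @P_CH R \/ P = @P_PBR R ->
    forall p : R, 0 <= p ->
      Prob mu [pred x | P n (nsucc x) phi <= p] <= p.
Proof.
move=> P HP p hp.
case: hmu => hmu0 hmu1.
have p0 : 0 <= phi by apply: ltW.
have p1 : phi <= 1 by apply: ltW.
have nsl : forall x : outcome n, (nsucc x <= n)%N.
  move=> x; rewrite /nsucc.
  apply: (@leq_trans (\sum_(i < n) 1)%N).
    by apply: leq_sum => i _; exact: leq_b1.
  by rewrite sum1_card card_ord.
have hle : forall x : outcome n, P_X n (nsucc x) phi <= P n (nsucc x) phi.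
  move=> x; case: HP => [->|[->|->]]; first by [].
    exact: (@cmp_CH R n hn phi hphi0 hphi1 _ (nsl x)).
  exact: (@cmp_PBR R n hn phi hphi0 hphi1 _ (nsl x)).
have exW : exists k, P_X n k phi <= p by exists n.+1; rewrite PX_big.
case: (ex_minnP exW) => ks hks hmin.
apply: (@le_trans _ _ (Prob mu [pred x | (ks <= nsucc x)%N])).
  rewrite /Prob big_mkcond [X in _ <= X]big_mkcond; apply: ler_sum => x _ /=.
  case: ifP => h; last by case: ifP.
  by rewrite hmin // (le_trans (hle x) h).
apply: le_trans hks.
exact: (@dom _ _ _ _ hmu0 hB p0 p1 hmu1 ks).
Qed.
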